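(* Let $b_1,\dots,b_n$ be nonnegative integers, let $i$ be an index with $b_i\ge1$, and put $[\mathbf b-\varepsilon_i]=[b_1,\dots,b_{i-1},b_i-1,b_{i+1},\dots,b_n]$ and $d=b_1+\dots+b_n+1$. Write the Hilbert–Poincaré series of $R_{[\mathbf b-\varepsilon_i]}$ as $$P_{R_{[\mathbf b-\varepsilon_i]}}(t)=\frac{h_0([\mathbf b-\varepsilon_i])+h_1([\mathbf b-\varepsilon_i])t+\dots+h_r([\mathbf b-\varepsilon_i])t^r}{(1-t)^{d-1}}$$ with $h_r([\mathbf b-\varepsilon_i])\ne0$. Then $$P_{R_{[\mathbf b]}}(t)=\frac{h_0([\mathbf b])+h_1([\mathbf b])t+\dots+h_r([\mathbf b])t^r+h_{r+1}([\mathbf b])t^{r+1}}{(1-t)^{d}},$$ where $h_0([\mathbf b])=1$, for $k=1,\dots,r$ $$h_k([\mathbf b])=\frac{(d-1-b_i-(k-1))\,h_{k-1}([\mathbf b-\varepsilon_i])+(b_i+k)\,h_k([\mathbf b-\varepsilon_i])}{b_i},$$ and $h_{r+1}([\mathbf b])=\frac{(d-1-b_i-r)\,h_r([\mathbf b-\varepsilon_i])}{b_i}$ (which may be zero). If $h_{r+1}([\mathbf b])=0$, then $h_r([\mathbf b])=\frac{h_{r-1}([\mathbf b-\varepsilon_i])+(b_i+r)h_r([\mathbf b-\varepsilon_i])}{b_i}>0$.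
   Context: Let $K$ be a field and $b_1,\dots,b_n$ nonnegative integers; write $[\mathbf b]=[b_1,\dots,b_n]$. Let $\mathcal M=\{0,\dots,b_1\}\times\dots\times\{0,\dots,b_n\}\subset\mathbb N^n$, $S=K[T_v\mid v\in\mathcal M]$ with all $T_v$ of degree 1, and let $\mathcal J_{[\mathbf b]}$ be the kernel of the ring homomorphism $S\to K[x_{j,l}\mid 1\le j\le n,\,0\le l\le b_j]$, $T_v\mapsto x_{1,v_1}x_{2,v_2}\cdots x_{n,v_n}$ (the ideal of the Segre embedding of $\mathbb P^{b_1}\times\dots\times\mathbb P^{b_n}$). Set $R_{[\mathbf b]}=S/\mathcal J_{[\mathbf b]}$. Its Hilbert function is $H_{R_{[\mathbf b]}}(l)=\prod_{j=1}^n\binom{b_j+l}{b_j}$, its Krull dimension is $b_1+\dots+b_n+1$, and its Hilbert–Poincaré series is $P_{R_{[\mathbf b]}}(t)=\sum_{l\ge0}H_{R_{[\mathbf b]}}(l)t^l$. *)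

(* Defs.v *)
From HB Require Import structures.
From mathcomp Require Import all_boot all_order all_algebra.
Set Implicit Arguments. Unset Strict Implicit. Unset Printing Implicit Defensive.
Import Order.TTheory GRing.Theory Num.Theory.
Local Open Scope ring_scope.

Definition segreHilb (n : nat) (b : 'I_n -> nat) (l : nat) : nat :=
  (\prod_(j < n) 'C(b j + l, b j))%N.

Definition segreDim (n : nat) (b : 'I_n -> nat) : nat := (\sum_(j < n) b j).+1.

Definition decr_at (n : nat) (b : 'I_n -> nat) (i : 'I_n) : 'I_n -> nat :=
  fun j => if j == i then (b j).-1 else b j.

(* Coefficient of t^m in 1/(1-t)^e. *)
Definition invPowCoef (e m : nat) : rat :=
  match e with
  | 0 => (m == 0%N)%:R
  | e'.+1 => ('C(m + e', e'))%:R
  end.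

(* Coefficient of t^l in the power series h(t)/(1-t)^e. *)
Definition ratSeriesCoef (h : {poly rat}) (e l : nat) : rat :=
  \sum_(k < (l.+1)) h`_k * invPowCoef e (l - k).

(* "P(t) = h(t)/(1-t)^e" as an identity of formal power series, where
   P(t) = sum_l H(l) t^l, compared coefficientwise. *)
Definition HPseries_is (H : nat -> nat) (h : {poly rat}) (e : nat) : Prop :=
  forall l : nat, (H l)%:R = ratSeriesCoef h e l.

Definition prevCoef (h : {poly rat}) (k : nat) : rat :=
  if k is k'.+1 then h`_k' else 0.

Definition newCoef (n : nat) (b : 'I_n -> nat) (i : 'I_n) (h' : {poly rat})
    (k : nat) : rat :=
  let d := segreDim b in
  let r := (size h').-1 in
  if k == 0%N then 1
  else if (k <= r)%N then
    (((d.-1 - b i)%N)%:R - (k.-1)%:R) * h'`_(k.-1) / (b i)%:R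
    + ((b i + k)%N)%:R * h'`_k / (b i)%:R
  else (* k = r + 1 *)
    (((d.-1 - b i)%N)%:R - r%:R) * h'`_r / (b i)%:R.

Definition newNumerator (n : nat) (b : 'I_n -> nat) (i : 'I_n) (h' : {poly rat})
  : {poly rat} := \poly_(k < ((size h').-1).+2) newCoef b i h' k.

(* Main.v *)
Require Import Defs.
From HB Require Import structures.
From mathcomp Require Import all_boot all_order all_algebra ring zify.
Import Order.TTheory GRing.Theory Num.Theory.
Local Open Scope ring_scope.

Lemma binprod (m e : nat) :
  \prod_(u < e) ((m + u.+1)%:R / (u.+1)%:R : rat) = ('C(m + e, e))%:R.
Proof.
elim: e => [|e IH]; first by rewrite big_ord0 bin0.
rewrite big_ord_recr /= IH.
have H := mul_bin_diag (m + e.+1) e.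
rewrite addnS /= in H.
apply: (mulIf (x := (e.+1)%:R)); first by rewrite pnatr_eq0.
rewrite -mulrA mulfVK ?pnatr_eq0 // -natrM -natrM; congr (_%:R); rewrite addnS mulnC H mulnC //.
Qed.

Lemma sum_ext (n1 n2 : nat) (F : nat -> rat) : (n1 <= n2)%N ->
  (forall k, (n1 <= k < n2)%N -> F k = 0) ->
  \sum_(k < n1) F k = \sum_(k < n2) F k.
Proof.
move=> le12 H0; rewrite (big_ord_widen _ _ le12) big_mkcond /=.
apply: eq_bigr => k _; case: ifP => // hk; by rewrite H0 // leqNgt hk ltn_ord.
Qed.

Definition Bp (e k : nat) : {poly rat} :=
  \prod_(u < e) (('X + ((u.+1)%:R - k%:R)%:P) * ((u.+1)%:R^-1)%:P).

Lemma Bp_eval e k x : (Bp e k).[x] = \prod_(u < e) ((x + ((u.+1)%:R - k%:R)) / (u.+1)%:R).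
Proof. rewrite /Bp horner_prod. apply: eq_bigr => u _; rewrite !hornerE. reflexivity. Qed.

Definition Pp (n : nat) (c : 'I_n -> nat) : {poly rat} :=
  \prod_(j < n) \prod_(u < c j) (('X + ((u.+1)%:R)%:P) * ((u.+1)%:R^-1)%:P).

Lemma Pp_eval n c x : (@Pp n c).[x] = \prod_(j < n) \prod_(u < c j) ((x + (u.+1)%:R) / (u.+1)%:R).
Proof. by rewrite /Pp horner_prod; apply: eq_bigr => j _; rewrite horner_prod;
  apply: eq_bigr => u _; rewrite !hornerE. Qed.

Lemma Pp_nat n c (l : nat) : (@Pp n c).[l%:R] = (segreHilb c l)%:R.
Proof.
rewrite Pp_eval /segreHilb natr_prod; apply: eq_bigr => j _.
rewrite addnC -binprod. apply: eq_bigr => u _; by rewrite natrD.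
Qed.

Lemma revprod (e : nat) :
  \prod_(u < e) ((e - u)%:R / (u.+1)%:R : rat) = 1.
Proof.
rewrite prodf_div (reindex_inj rev_ord_inj) /=.
have -> : \prod_(j < e) (e - (e - j.+1))%:R = \prod_(j < e) (j.+1)%:R :> rat.
  by apply: eq_bigr => j _; rewrite subKn.
apply: divff; apply/prodf_neq0 => j _; by rewrite pnatr_eq0.
Qed.

Lemma signprod (e s : nat) :
  \prod_(u < e) ((s%:R - (e.+1)%:R + ((u.+1)%:R - s%:R)) / (u.+1)%:R : rat) = (-1)^+e.
Proof.
have -> : \prod_(u < e) ((s%:R - (e.+1)%:R + ((u.+1)%:R - s%:R)) / (u.+1)%:R : rat)
   = \prod_(u < e) - ((e - u)%:R / (u.+1)%:R).
  apply: eq_bigr => u _; rewrite -mulNr; congr (_ / _).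
  rewrite natrB; last by apply: ltnW.
  rewrite -!natr1; ring.
by rewrite prodrN revprod card_ord mulr1.
Qed.

Lemma lead_eval (g Q : {poly rat}) (e s : nat) :
  (size g <= s.+1)%N -> (s <= e)%N ->
  (forall l, Q.[l%:R] = ratSeriesCoef g e.+1 l) ->
  g`_s * (-1)^+e = Q.[s%:R - (e.+1)%:R].
Proof.
move=> /leq_sizeP Hsz Hse HQ.
set R := \sum_(k < s.+1) g`_k *: Bp e k.
have Bnat k l : (k <= l)%N -> (Bp e k).[l%:R] = ('C(l - k + e, e))%:R.
  move=> kl; rewrite Bp_eval -binprod; apply: eq_bigr => u _.
  by rewrite natrD natrB //; congr (_ / _); ring.
have HR l : (s <= l)%N -> R.[l%:R] = ratSeriesCoef g e.+1 l.
  move=> sl; rewrite horner_sum /ratSeriesCoef /=.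
  rewrite (eq_bigr (fun k : 'I_s.+1 => g`_k * (Bp e k).[l%:R])); last first.
    by move=> k _; rewrite hornerZ.
  rewrite (@sum_ext s.+1 l.+1 (fun k => g`_k * (Bp e k).[l%:R])) //.
  - by apply: eq_bigr => k _; rewrite Bnat // -ltnS.
  - by move=> k /andP [sk _]; rewrite Hsz // mul0r.
have QR : Q = R.
  apply/eqP; rewrite -subr_eq0; apply/negPn/negP => nz.
  have H1 : all (root (Q - R)) [seq (s + j)%:R | j <- iota 0 (size (Q - R))].
    apply/allP => x /mapP [j _ ->].
    by rewrite rootE hornerD hornerN HR ?leq_addr // HQ subrr.
  have H2 : uniq [seq (s + j)%:R : rat | j <- iota 0 (size (Q - R))].
    rewrite map_inj_uniq ?iota_uniq // => a c /eqP.
    by rewrite eqr_nat eqn_add2l => /eqP.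
  by have := max_poly_roots nz H1 H2; rewrite size_map size_iota ltnn.
rewrite QR horner_sum big_ord_recr /= big1 ?add0r.
  by rewrite hornerZ Bp_eval signprod.
move=> k _; rewrite hornerZ Bp_eval; apply/eqP; rewrite mulf_eq0; apply/orP; right.
have kls : (k < s)%N by [].
have ho : (e + k - s < e)%N.
  lia.
apply/prodf_eq0; exists (Ordinal ho) => //.
rewrite /= mulf_eq0; apply/orP; left.
rewrite -!natr1 natrB; last lia.
rewrite natrD; apply/eqP; ring.
Qed.

Lemma hilb_rel n (b : 'I_n -> nat) (i : 'I_n) l : (1 <= b i)%N ->
  (segreHilb b l * b i = segreHilb (decr_at b i) l * (b i + l))%N.
Proof.
move=> hb; rewrite /segreHilb (bigD1 i) //= [X in (_ = X * _)%N](bigD1 i) //=.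
have -> : (\prod_(j < n | j != i) 'C(decr_at b i j + l, decr_at b i j)
   = \prod_(j < n | j != i) 'C(b j + l, b j))%N.
  by apply: eq_bigr => j ji; rewrite /decr_at (negbTE ji).
rewrite /decr_at eqxx; move: hb; case: (b i) => [//|c] _ /=.
have H := mul_bin_diag (c.+1 + l) c; rewrite addSn /= in H.
rewrite -!mulnA [X in (_ * X)%N = _]mulnC [X in _ = (_ * X)%N]mulnC !mulnA.
congr (_ * _)%N; by rewrite mulnC -H addSn mulnC.
Qed.

Theorem mainTheorem4 (n : nat) (b : 'I_n -> nat) (i : 'I_n) (h' : {poly rat}) :
  (1 <= b i)%N ->
  h' != 0 ->
  HPseries_is (segreHilb (decr_at b i)) h' (segreDim b).-1 ->
  let r := (size h').-1 in
  let h := newNumerator b i h' in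
  [/\ HPseries_is (segreHilb b) h (segreDim b),
      h`_0 = 1,
      (forall k : nat, (1 <= k <= r)%N ->
         h`_k = ((((segreDim b).-1 - b i)%N%:R - (k.-1)%:R) * h'`_(k.-1)
                 + ((b i + k)%N)%:R * h'`_k) / (b i)%:R),
      h`_r.+1 = ((((segreDim b).-1 - b i)%N)%:R - r%:R) * h'`_r / (b i)%:R
    & (h`_r.+1 = 0 ->
         h`_r = (prevCoef h' r + ((b i + r)%N)%:R * h'`_r) / (b i)%:R
         /\ 0 < h`_r)].
Proof.
move=> hb1 h'nz Hser r h.
have biD : (b i <= \sum_(j < n) b j)%N by rewrite (bigD1 i) //= leq_addr.
have [D' HD'] : exists D', \sum_(j < n) b j = D'.+1.
  by exists (\sum_(j < n) b j).-1; rewrite prednK //; apply: leq_trans biD.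
have Hd : segreDim b = D'.+2 by rewrite /segreDim HD'.
have bnz : (b i)%:R != 0 :> rat by rewrite pnatr_eq0 -lt0n.
have szh' : size h' = r.+1 by rewrite /r prednK // size_poly_gt0.
have h'r : h'`_r != 0.
  by rewrite -lead_coef_eq0 in h'nz; rewrite /lead_coef szh' in h'nz.
have h'big k : (r < k)%N -> h'`_k = 0.
  by move=> rk; apply: nth_default; rewrite szh'.
have h'0 : h'`_0 = 1.
  have := Hser 0%N; rewrite Hd /ratSeriesCoef big_ord1 /= add0n binn mulr1.
  rewrite /segreHilb big1 // => j _; by rewrite addn0 binn.
pose A : rat := ((D'.+1 - b i)%N)%:R.
have coef_h k : h`_k * (b i)%:R =
    (A + 1 - k%:R) * prevCoef h' k + ((b i + k)%N)%:R * h'`_k.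
  rewrite /h /newNumerator coef_poly /newCoef Hd /= -/r /A.
  case: k => [|k]; first by rewrite /= mul1r mulr0 add0r addn0 h'0 mulr1.
  rewrite /= ltnS; case: (ltnP r k.+1) => hk.
    case: (ltngtP k r) => hkr.
    - by move: hk; rewrite ltnS leqNgt hkr.
    - rewrite ltnS leqNgt hkr /= mul0r h'big ?h'big ?mulr0 ?addr0 //; lia.
    - rewrite hkr ltnSn /= (h'big r.+1) // mulr0 addr0 mulfVK //.
      rewrite -natr1; ring.
  rewrite ltnS (ltnW hk) mulrDl !mulfVK //.
  rewrite -natr1; ring.
have H1 : HPseries_is (segreHilb b) h (segreDim b).
  move=> l; rewrite Hd.
  have Hl := @hilb_rel n b i l hb1.
  have Hs := Hser l; rewrite Hd /= in Hs.
  apply: (mulIf bnz); rewrite -natrM Hl natrM Hs.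
  rewrite /ratSeriesCoef /= !mulr_suml.
  transitivity (\sum_(k < l.+1) ((A - k%:R) * h'`_k * ('C(l - k + D', D'.+1))%:R
      + ((b i + k)%N)%:R * h'`_k * ('C(l - k + D'.+1, D'.+1))%:R)).
    apply: eq_bigr => k _.
    have kl : (k <= l)%N by rewrite -ltnS.
    set m := (l - k)%N.
    have lE : l = (m + k)%N by rewrite /m subnK.
    have E1 : 'C(m + D'.+1, D'.+1) = ('C(m + D', D'.+1) + 'C(m + D', D'))%N.
      by rewrite addnS binS.
    have E2 : (D'.+1 * 'C(m + D', D'.+1) = m * 'C(m + D', D'))%N.
      by rewrite mul_bin_left addnK.
    move: E2 => /(congr1 (fun x => x%:R : rat)); rewrite !natrM => E2.
    rewrite E1 !natrD.
    have hD : (D'.+1)%:R != 0 :> rat by rewrite pnatr_eq0.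
    have Ey : ('C(m + D', D'.+1))%:R = m%:R * ('C(m + D', D'))%:R / (D'.+1)%:R :> rat.
      by apply: (mulfI hD); rewrite E2 [RHS]mulrC divfK.
    have lR : (l%:R : rat) = m%:R + (nat_of_ord k)%:R by rewrite -natrD /m subnK.
    have biD' : (b i <= D'.+1)%N by rewrite -HD'.
    rewrite Ey lR /A !natrB //.
    field; by rewrite nat1r pnatr_eq0.
  symmetry.
  rewrite (eq_bigr (fun k : 'I_l.+1 => (A + 1 - k%:R) * prevCoef h' k *
      ('C(l - k + D'.+1, D'.+1))%:R + ((b i + k)%N)%:R * h'`_k *
      ('C(l - k + D'.+1, D'.+1))%:R)); last first.
    by move=> k _; rewrite mulrAC coef_h mulrDl.
  rewrite !big_split /=; congr (_ + _).
  rewrite big_ord_recl /= mulr0 mul0r add0r.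
  rewrite -(@sum_ext l l.+1 (fun k => (A - k%:R) * h'`_k * ('C(l - k + D', D'.+1))%:R)) //; last first.
    move=> k /andP[lk kl]; have -> : k = l by lia.
    by rewrite subnn add0n bin_small // mulr0.
  apply: eq_bigr => k _.
  have kl : (k < l)%N := ltn_ord k.
  have -> : (l - bump 0 k + D'.+1 = l - k + D')%N by rewrite /bump /=; lia.
  rewrite /bump /= add0n natrD; congr (_ * _ * _); ring.
have biD' : (b i <= D'.+1)%N by rewrite -HD'.
have C0 : h`_0 = 1 by rewrite /h /newNumerator coef_poly /newCoef.
have Cmid : forall k : nat, (1 <= k <= r)%N ->
    h`_k = ((((segreDim b).-1 - b i)%N%:R - (k.-1)%:R) * h'`_(k.-1)
                 + ((b i + k)%N)%:R * h'`_k) / (b i)%:R.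
  move=> k /andP[k1 kr]; rewrite /h /newNumerator coef_poly /newCoef /= -/r.
  rewrite (_ : (k < r.+2)%N); last by rewrite ltnS (leq_trans kr).
  rewrite (_ : (k == 0)%N = false); last by case: (k) k1.
  by rewrite kr [RHS]mulrDl.
have Crr : h`_r.+1 = ((((segreDim b).-1 - b i)%N)%:R - r%:R) * h'`_r / (b i)%:R.
  rewrite /h /newNumerator coef_poly /newCoef /= -/r.
  by rewrite ltnSn ltnn.
split => // h0.
have Er : (D'.+1 - b i)%N = r.
  move: h0; rewrite Crr Hd /= => /eqP; rewrite !mulf_eq0 invr_eq0 (negbTE bnz) (negbTE h'r) !orbF.
  by rewrite subr_eq0 eqr_nat => /eqP.
split.
  have [r0|rpos] := posnP r.
    rewrite r0 C0 /= add0r addn0 h'0 mulr1 divff //.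
  rewrite Cmid; last by rewrite rpos leqnn.
  rewrite Hd /= Er; congr (_ / _); congr (_ + _).
  rewrite /prevCoef; case: (r) rpos => [//|k] _ /=.
  by rewrite -natr1 addrAC subrr add0r mul1r.
have rD : (r + b i = D'.+1)%N by lia.
have L1 := @lead_eval h' (@Pp n (decr_at b i)) D' r.
have {L1} L1 : h'`_r * (-1) ^+ D' = (@Pp n (decr_at b i)).[r%:R - D'.+1%:R].
  apply: L1; first by rewrite szh'.
    lia.
  by move=> l; rewrite Pp_nat (Hser l) Hd.
have allle : forall j, (b j <= b i)%N.
  move=> j; rewrite leqNgt; apply/negP => hj.
  have ji : j != i by apply: contraTneq hj => ->; rewrite ltnn.
  have : (@Pp n (decr_at b i)).[r%:R - D'.+1%:R] == 0.
    rewrite Pp_eval; apply/prodf_eq0; exists j => //; apply/prodf_eq0.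
    have hu : ((b i).-1 < decr_at b i j)%N by rewrite /decr_at (negbTE ji); lia.
    exists (Ordinal hu) => //=.
    rewrite mulf_eq0; apply/orP; left.
    rewrite prednK // -rD natrD; apply/eqP; ring.
  by rewrite -L1 mulf_eq0 signr_eq0 orbF (negbTE h'r).
have L2 := @lead_eval h (@Pp n b) D'.+1 r.
have {L2} L2 : h`_r * (-1) ^+ D'.+1 = (@Pp n b).[r%:R - D'.+2%:R].
  apply: L2.
  - apply/leq_sizeP => j; rewrite leq_eqVlt => /orP [/eqP <- //| hj].
    by rewrite /h /newNumerator coef_poly -/r ltnS leqNgt hj.
  - lia.
  - by move=> l; rewrite Pp_nat (H1 l) Hd.
pose P := \prod_(j < n) \prod_(u < b j) ((b i - u)%N%:R / (u.+1)%:R : rat).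
have Ppos : 0 < P.
  apply: prodr_gt0 => j _; apply: prodr_gt0 => u _.
  have := allle j; have := ltn_ord u => hu hj.
  by rewrite divr_gt0 // ltr0n; lia.
have HP : (@Pp n b).[r%:R - D'.+2%:R] = (-1) ^+ D'.+1 * P.
  rewrite Pp_eval -[in RHS]HD' -prodrXr -big_split /=; apply: eq_bigr => j _.
  rewrite (eq_bigr (fun u : 'I_(b j) => - ((b i - u)%N%:R / (u.+1)%:R))); last first.
    move=> u _; have := allle j; have := ltn_ord u => hu hj.
    rewrite -mulNr; congr (_ / _).
    rewrite natrB; last by lia.
    rewrite -(natr1 (D'.+1)) -rD natrD -natr1; ring.
  by rewrite prodrN card_ord.
have sz : ((-1) ^+ D'.+1 : rat) != 0 by rewrite signr_eq0.
have : h`_r = P by apply: (mulIf sz); rewrite L2 HP mulrC.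
by move=> ->.
Qed.
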